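(* Let $x\in(0,\pi/2)$ and $p,q\in\mathbb{R}$. (i) If $q\ge 1$ and $p\le 3q-\frac85$, then \[ \left(\tfrac{2}{\pi}\right)^{p}+\left(1-\left(\tfrac{2}{\pi}\right)^{p}\right)\cos^{q}x<\left(\tfrac{\sin x}{x}\right)^{p}<1-\tfrac{p}{3q}+\tfrac{p}{3q}\cos^{q}x \quad\text{if } p>0, \] \[ \left(\tfrac{2}{\pi}\right)^{1-\cos^{q}x}<\tfrac{\sin x}{x}<\exp\tfrac{\cos^{q}x-1}{3q}\quad\text{if } p=0, \] \[ 1-\tfrac{p}{3q}+\tfrac{p}{3q}\cos^{q}x<\left(\tfrac{\sin x}{x}\right)^{p}<\left(\tfrac{2}{\pi}\right)^{p}+\left(1-\left(\tfrac{2}{\pi}\right)^{p}\right)\cos^{q}x\quad\text{if } p<0, \] and the constants $\frac13$ and $\kappa_{p,q}$ are best possible, where $\kappa_{p,q}=\frac{q}{p}\left(1-\left(\frac{2}{\pi}\right)^p\right)$ for $p\neq 0$ and $\kappa_{0,q}=q\ln\frac{\pi}{2}$. (Equivalently, these inequalities say $\frac13 U_q(\cos x)<U_p(\frac{\sin x}{x})<\kappa_{p,q}U_q(\cos x)$, and $\frac13$ cannot be replaced by a larger constant nor $\kappa_{p,q}$ by a smaller one.) (ii) If $\frac{34}{35}<q\le 1$ and $p\ge \frac{\pi^2}{4}-1$, then the double inequality stated in (i) for $p>0$ holds with both inequality signs reversed. (iii) If $0<q\le \frac{34}{35}$ and $p\ge 3q-\frac85$, then all three double inequalities stated in (i) (for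 $p>0$, $p=0$, $p<0$) hold with all inequality signs reversed. (iv) If $q\le 0$ and $p\ge 3q-\frac85$, then \[ \left(\tfrac{\sin x}{x}\right)^{p}>1-\tfrac{p}{3q}+\tfrac{p}{3q}\cos^{q}x \text{ if } p>0,\quad \tfrac{\sin x}{x}>\exp\tfrac{\cos^{q}x-1}{3q}\text{ if } p=0,\quad \left(\tfrac{\sin x}{x}\right)^{p}<1-\tfrac{p}{3q}+\tfrac{p}{3q}\cos^{q}x\text{ if } p<0, \] where $\frac13$ is the best constant.
   Context: For $t\in(0,1)$ and $p\in\mathbb{R}$ let $U_p(t)=\frac{1-t^p}{p}$ if $p\ne0$ and $U_0(t)=-\ln t$. When $q=0$, expressions of the form $\frac{1-u^q}{q}$ are interpreted as their limit $-\ln u$; thus $1-\frac{p}{3q}+\frac{p}{3q}\cos^q x$ means $1+\frac p3\ln\cos x$ and $\exp\frac{\cos^q x-1}{3q}$ means $(\cos x)^{1/3}$ when $q=0$. ''Best constant'' refers to the constant $c$ in bounds of the form $1-\frac{p}{q}c+\frac{p}{q}c\cos^q x$ (resp. $\exp(c\frac{\cos^q x-1}{q})$ for $p=0$), i.e. to $c$ in $U_p(\frac{\sin x}{x})\lessgtr c\,U_q(\cos x)$. *)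

(* Defs.v *)
From Stdlib Require Import Reals.
Open Scope R_scope.

Definition U (p t : R) : R :=
  if Req_EM_T p 0 then - ln t else (1 - Rpower t p) / p.

Definition kappa (p q : R) : R :=
  if Req_EM_T p 0 then q * ln (PI / 2) else q / p * (1 - Rpower (2 / PI) p).

Definition third_bound (p q x : R) : R :=
  if Req_EM_T q 0 then 1 + p / 3 * ln (cos x)
  else 1 - p / (3 * q) + p / (3 * q) * Rpower (cos x) q.

Definition third_bound0 (q x : R) : R :=
  if Req_EM_T q 0 then Rpower (cos x) (1 / 3)
  else exp ((Rpower (cos x) q - 1) / (3 * q)).

Definition kappa_bound (p q x : R) : R :=
  Rpower (2 / PI) p + (1 - Rpower (2 / PI) p) * Rpower (cos x) q.

Definition kappa_bound0 (q x : R) : R :=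
  Rpower (2 / PI) (1 - Rpower (cos x) q).

Definition sinc (x : R) : R := sin x / x.

(* Main.v *)
Require Import Defs.
From Stdlib Require Import Reals Lra Psatz.
From Coquelicot Require Import Coquelicot.
Open Scope R_scope.

Definition sL (x : R) := x - x^3/6 + x^5/120 - x^7/5040.
Definition sU (x : R) := x - x^3/6 + x^5/120 - x^7/5040 + x^9/362880.
Definition cL (x : R) := 1 - x^2/2 + x^4/24 - x^6/720.
Definition cU (x : R) := 1 - x^2/2 + x^4/24 - x^6/720 + x^8/40320.

Lemma INR_fact_S n : INR (Factorial.fact (S n)) = INR (S n) * INR (Factorial.fact n).
Proof. change (Factorial.fact (S n)) with (S n * Factorial.fact n)%nat; rewrite mult_INR; reflexivity. Qed.

Lemma fact_vals : INR (Factorial.fact 0) = 1 /\ INR (Factorial.fact 1) = 1 /\ INR (Factorial.fact 2) = 2 /\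
  INR (Factorial.fact 3) = 6 /\ INR (Factorial.fact 4) = 24 /\ INR (Factorial.fact 5) = 120 /\
  INR (Factorial.fact 6) = 720 /\ INR (Factorial.fact 7) = 5040 /\ INR (Factorial.fact 8) = 40320 /\
  INR (Factorial.fact 9) = 362880 /\ INR (Factorial.fact 10) = 3628800 /\ INR (Factorial.fact 11) = 39916800
  /\ INR (Factorial.fact 12) = 479001600.
Proof.
  assert (H0 : INR (Factorial.fact 0) = 1) by reflexivity.
  assert (H1 : INR (Factorial.fact 1) = 1) by (rewrite INR_fact_S, H0; simpl; lra).
  assert (H2 : INR (Factorial.fact 2) = 2) by (rewrite INR_fact_S, H1; simpl; lra).
  assert (H3 : INR (Factorial.fact 3) = 6) by (rewrite INR_fact_S, H2; simpl; lra).
  assert (H4 : INR (Factorial.fact 4) = 24) by (rewrite INR_fact_S, H3; simpl; lra).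
  assert (H5 : INR (Factorial.fact 5) = 120) by (rewrite INR_fact_S, H4; simpl; lra).
  assert (H6 : INR (Factorial.fact 6) = 720) by (rewrite INR_fact_S, H5; simpl; lra).
  assert (H7 : INR (Factorial.fact 7) = 5040) by (rewrite INR_fact_S, H6; simpl; lra).
  assert (H8 : INR (Factorial.fact 8) = 40320) by (rewrite INR_fact_S, H7; simpl; lra).
  assert (H9 : INR (Factorial.fact 9) = 362880) by (rewrite INR_fact_S, H8; simpl; lra).
  assert (H10 : INR (Factorial.fact 10) = 3628800) by (rewrite INR_fact_S, H9; simpl; lra).
  assert (H11 : INR (Factorial.fact 11) = 39916800) by (rewrite INR_fact_S, H10; simpl; lra).
  assert (H12 : INR (Factorial.fact 12) = 479001600) by (rewrite INR_fact_S, H11; simpl; lra).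
  tauto.
Qed.

Ltac factvals H :=
  destruct fact_vals as (F0&F1&F2&F3&F4&F5&F6&F7&F8&F9&F10&F11&F12);
  rewrite ?F0, ?F1, ?F2, ?F3, ?F4, ?F5, ?F6, ?F7, ?F8, ?F9, ?F10, ?F11, ?F12 in H;
  clear F0 F1 F2 F3 F4 F5 F6 F7 F8 F9 F10 F11 F12.

Lemma sin_taylor x : 0 <= x <= PI -> sL x <= sin x <= sU x.
Proof.
  intros Hx. destruct (sin_bound x 1 (proj1 Hx) (proj2 Hx)) as [H1 H2].
  unfold sin_approx, sin_term in H1, H2. cbn [sum_f_R0 Nat.mul Nat.add] in H1, H2.
  factvals H1. factvals H2.
  unfold sL, sU. split; [ring_simplify in H1 | ring_simplify in H2]; lra.
Qed.

Lemma cos_taylor x : - PI / 2 <= x <= PI / 2 -> cL x <= cos x <= cU x.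
Proof.
  intros Hx. destruct (cos_bound x 1 (proj1 Hx) (proj2 Hx)) as [H1 H2].
  unfold cos_approx, cos_term in H1, H2. cbn [sum_f_R0 Nat.mul Nat.add] in H1, H2.
  factvals H1. factvals H2.
  unfold cL, cU. split; [ring_simplify in H1 | ring_simplify in H2]; lra.
Qed.

Lemma PI2_ub : PI / 2 < 3927 / 2500.
Proof.
  destruct (Rlt_le_dec (PI/2) (3927/2500)) as [h|h]; auto. exfalso.
  assert (Hc : 0 <= cos (3927/2500)) by (apply cos_ge_0; lra).
  assert (Hp : - PI / 2 <= 3927/2500 <= PI / 2) by lra.
  destruct (cos_bound (3927/2500) 2 (proj1 Hp) (proj2 Hp)) as [H1 H2].
  unfold cos_approx, cos_term in H2. cbn [sum_f_R0 Nat.mul Nat.add] in H2.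
  factvals H2. lra.
Qed.
Lemma R_F0 : forall z, 0 <= z <= (987/400) -> 0 < 247337072640 + (-54257817600)*z + 5004840960*z^2 + (-227727360)*z^3 + 3359664*z^4 + 174888*z^5 + (-11218)*z^6 + 273*z^7 + (-3)*z^8.
Proof.
  intros z Hz.
  assert (H0 : 0 <= (z - 0)^0 * ((987/400) - z)^8) by (apply Rmult_le_pos; apply pow_le; lra).
  assert (H1 : 0 <= (z - 0)^1 * ((987/400) - z)^7) by (apply Rmult_le_pos; apply pow_le; lra).
  assert (H2 : 0 <= (z - 0)^2 * ((987/400) - z)^6) by (apply Rmult_le_pos; apply pow_le; lra).
  assert (H3 : 0 <= (z - 0)^3 * ((987/400) - z)^5) by (apply Rmult_le_pos; apply pow_le; lra).
  assert (H4 : 0 <= (z - 0)^4 * ((987/400) - z)^4) by (apply Rmult_le_pos; apply pow_le; lra).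
  assert (H5 : 0 <= (z - 0)^5 * ((987/400) - z)^3) by (apply Rmult_le_pos; apply pow_le; lra).
  assert (H6 : 0 <= (z - 0)^6 * ((987/400) - z)^2) by (apply Rmult_le_pos; apply pow_le; lra).
  assert (H7 : 0 <= (z - 0)^7 * ((987/400) - z)^1) by (apply Rmult_le_pos; apply pow_le; lra).
  assert (H8 : 0 <= (z - 0)^8 * ((987/400) - z)^0) by (apply Rmult_le_pos; apply pow_le; lra).
  lra.
Qed.

Lemma P_F0 : forall x, 0 < x < 3927/2500 -> 0 < x * sL x ^ 3 + (81 - 36 * x ^ 2) * sL x ^ 2 * cU x - 57 * x * sL x * cU x ^ 2 - 24 * x ^ 2 * cU x ^ 3.
Proof.
  intros x Hx.
  assert (Hz : 0 <= x^2 <= 987/400) by nra.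
  pose proof (R_F0 (x^2) Hz) as HR.
  replace (x * sL x ^ 3 + (81 - 36 * x ^ 2) * sL x ^ 2 * cU x - 57 * x * sL x * cU x ^ 2 - 24 * x ^ 2 * cU x ^ 3) with ((/ 8193540096000) * x ^ 10 * (247337072640 + (-54257817600)*(x^2) + 5004840960*(x^2)^2 + (-227727360)*(x^2)^3 + 3359664*(x^2)^4 + 174888*(x^2)^5 + (-11218)*(x^2)^6 + 273*(x^2)^7 + (-3)*(x^2)^8)) by (unfold sL, sU, cU; field).
  apply Rmult_lt_0_compat; [apply Rmult_lt_0_compat; [lra | apply pow_lt; lra] | exact HR].
Qed.

Lemma R_F1 : forall z, 0 <= z <= (987/400) -> 0 < 56899584000 + (-65028096000)*z + 26878279680*z^2 + (-4871946240)*z^3 + 453922560*z^4 + (-24960768)*z^5 + 848960*z^6 + (-17056)*z^7 + 173*z^8.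
Proof.
  intros z Hz.
  assert (H0 : 0 <= (z - 0)^0 * ((987/400) - z)^8) by (apply Rmult_le_pos; apply pow_le; lra).
  assert (H1 : 0 <= (z - 0)^1 * ((987/400) - z)^7) by (apply Rmult_le_pos; apply pow_le; lra).
  assert (H2 : 0 <= (z - 0)^2 * ((987/400) - z)^6) by (apply Rmult_le_pos; apply pow_le; lra).
  assert (H3 : 0 <= (z - 0)^3 * ((987/400) - z)^5) by (apply Rmult_le_pos; apply pow_le; lra).
  assert (H4 : 0 <= (z - 0)^4 * ((987/400) - z)^4) by (apply Rmult_le_pos; apply pow_le; lra).
  assert (H5 : 0 <= (z - 0)^5 * ((987/400) - z)^3) by (apply Rmult_le_pos; apply pow_le; lra).
  assert (H6 : 0 <= (z - 0)^6 * ((987/400) - z)^2) by (apply Rmult_le_pos; apply pow_le; lra).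
  assert (H7 : 0 <= (z - 0)^7 * ((987/400) - z)^1) by (apply Rmult_le_pos; apply pow_le; lra).
  assert (H8 : 0 <= (z - 0)^8 * ((987/400) - z)^0) by (apply Rmult_le_pos; apply pow_le; lra).
  lra.
Qed.

Lemma P_F1 : forall x, 0 < x < 3927/2500 -> 0 < 3 * x * sL x ^ 2 + 2 * (81 - 36 * x ^ 2) * sL x * cU x - 57 * x * cU x ^ 2.
Proof.
  intros x Hx.
  assert (Hz : 0 <= x^2 <= 987/400) by nra.
  pose proof (R_F1 (x^2) Hz) as HR.
  replace (3 * x * sL x ^ 2 + 2 * (81 - 36 * x ^ 2) * sL x * cU x - 57 * x * cU x ^ 2) with ((/ 541900800) * x ^ 1 * (56899584000 + (-65028096000)*(x^2) + 26878279680*(x^2)^2 + (-4871946240)*(x^2)^3 + 453922560*(x^2)^4 + (-24960768)*(x^2)^5 + 848960*(x^2)^6 + (-17056)*(x^2)^7 + 173*(x^2)^8)) by (unfold sL, sU, cU; field).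
  apply Rmult_lt_0_compat; [apply Rmult_lt_0_compat; [lra | apply pow_lt; lra] | exact HR].
Qed.

Lemma R_F2 : forall z, 0 <= z <= (987/400) -> 0 < 1088640 + (-987840)*z + 280560*z^2 + (-21336)*z^3 + 691*z^4 + (-12)*z^5.
Proof.
  intros z Hz.
  assert (H0 : 0 <= (z - 0)^0 * ((987/400) - z)^5) by (apply Rmult_le_pos; apply pow_le; lra).
  assert (H1 : 0 <= (z - 0)^1 * ((987/400) - z)^4) by (apply Rmult_le_pos; apply pow_le; lra).
  assert (H2 : 0 <= (z - 0)^2 * ((987/400) - z)^3) by (apply Rmult_le_pos; apply pow_le; lra).
  assert (H3 : 0 <= (z - 0)^3 * ((987/400) - z)^2) by (apply Rmult_le_pos; apply pow_le; lra).
  assert (H4 : 0 <= (z - 0)^4 * ((987/400) - z)^1) by (apply Rmult_le_pos; apply pow_le; lra).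
  assert (H5 : 0 <= (z - 0)^5 * ((987/400) - z)^0) by (apply Rmult_le_pos; apply pow_le; lra).
  lra.
Qed.

Lemma P_F2 : forall x, 0 < x < 3927/2500 -> 0 < 3 * x * sL x + (81 - 36 * x ^ 2) * cU x.
Proof.
  intros x Hx.
  assert (Hz : 0 <= x^2 <= 987/400) by nra.
  pose proof (R_F2 (x^2) Hz) as HR.
  replace (3 * x * sL x + (81 - 36 * x ^ 2) * cU x) with ((/ 13440) * x ^ 0 * (1088640 + (-987840)*(x^2) + 280560*(x^2)^2 + (-21336)*(x^2)^3 + 691*(x^2)^4 + (-12)*(x^2)^5)) by (unfold sL, sU, cU; field).
  apply Rmult_lt_0_compat; [apply Rmult_lt_0_compat; [lra | apply pow_lt; lra] | exact HR].
Qed.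

Lemma R_Ya : forall z, 0 <= z <= (987/400) -> 0 < 131681894400 + (-26336378880)*z + 7524679680*z^2 + (-697818240)*z^3 + 35163072*z^4 + (-1061424)*z^5 + 19224*z^6 + (-189)*z^7 + 1*z^8.
Proof.
  intros z Hz.
  assert (H0 : 0 <= (z - 0)^0 * ((987/400) - z)^8) by (apply Rmult_le_pos; apply pow_le; lra).
  assert (H1 : 0 <= (z - 0)^1 * ((987/400) - z)^7) by (apply Rmult_le_pos; apply pow_le; lra).
  assert (H2 : 0 <= (z - 0)^2 * ((987/400) - z)^6) by (apply Rmult_le_pos; apply pow_le; lra).
  assert (H3 : 0 <= (z - 0)^3 * ((987/400) - z)^5) by (apply Rmult_le_pos; apply pow_le; lra).
  assert (H4 : 0 <= (z - 0)^4 * ((987/400) - z)^4) by (apply Rmult_le_pos; apply pow_le; lra).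
  assert (H5 : 0 <= (z - 0)^5 * ((987/400) - z)^3) by (apply Rmult_le_pos; apply pow_le; lra).
  assert (H6 : 0 <= (z - 0)^6 * ((987/400) - z)^2) by (apply Rmult_le_pos; apply pow_le; lra).
  assert (H7 : 0 <= (z - 0)^7 * ((987/400) - z)^1) by (apply Rmult_le_pos; apply pow_le; lra).
  assert (H8 : 0 <= (z - 0)^8 * ((987/400) - z)^0) by (apply Rmult_le_pos; apply pow_le; lra).
  lra.
Qed.

Lemma P_Ya : forall x, 0 < x < 3927/2500 -> 0 < 3 * cU x * (sU x + sL x) + 2 * x ^ 3 - 6 * x + x * (sU x ^ 2 + sU x * sL x + sL x ^ 2).
Proof.
  intros x Hx.
  assert (Hz : 0 <= x^2 <= 987/400) by nra.
  pose proof (R_Ya (x^2) Hz) as HR.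
  replace (3 * cU x * (sU x + sL x) + 2 * x ^ 3 - 6 * x + x * (sU x ^ 2 + sU x * sL x + sL x ^ 2)) with ((/ 131681894400) * x ^ 3 * (131681894400 + (-26336378880)*(x^2) + 7524679680*(x^2)^2 + (-697818240)*(x^2)^3 + 35163072*(x^2)^4 + (-1061424)*(x^2)^5 + 19224*(x^2)^6 + (-189)*(x^2)^7 + 1*(x^2)^8)) by (unfold sL, sU, cU; field).
  apply Rmult_lt_0_compat; [apply Rmult_lt_0_compat; [lra | apply pow_lt; lra] | exact HR].
Qed.

Lemma R_Yb : forall z, 0 <= z <= (987/400) -> 0 < 80905355919360 + (-13563235123200)*z + 1107068497920*z^2 + (-58974676992)*z^3 + 2238026112*z^4 + (-62596800)*z^5 + 1294704*z^6 + (-19224)*z^7 + 189*z^8 + (-1)*z^9.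
Proof.
  intros z Hz.
  assert (H0 : 0 <= (z - 0)^0 * ((987/400) - z)^9) by (apply Rmult_le_pos; apply pow_le; lra).
  assert (H1 : 0 <= (z - 0)^1 * ((987/400) - z)^8) by (apply Rmult_le_pos; apply pow_le; lra).
  assert (H2 : 0 <= (z - 0)^2 * ((987/400) - z)^7) by (apply Rmult_le_pos; apply pow_le; lra).
  assert (H3 : 0 <= (z - 0)^3 * ((987/400) - z)^6) by (apply Rmult_le_pos; apply pow_le; lra).
  assert (H4 : 0 <= (z - 0)^4 * ((987/400) - z)^5) by (apply Rmult_le_pos; apply pow_le; lra).
  assert (H5 : 0 <= (z - 0)^5 * ((987/400) - z)^4) by (apply Rmult_le_pos; apply pow_le; lra).
  assert (H6 : 0 <= (z - 0)^6 * ((987/400) - z)^3) by (apply Rmult_le_pos; apply pow_le; lra).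
  assert (H7 : 0 <= (z - 0)^7 * ((987/400) - z)^2) by (apply Rmult_le_pos; apply pow_le; lra).
  assert (H8 : 0 <= (z - 0)^8 * ((987/400) - z)^1) by (apply Rmult_le_pos; apply pow_le; lra).
  assert (H9 : 0 <= (z - 0)^9 * ((987/400) - z)^0) by (apply Rmult_le_pos; apply pow_le; lra).
  lra.
Qed.

Lemma P_Yb : forall x, 0 < x < 3927/2500 -> 0 < - (cU x * (3 * sU x ^ 2 + 3 * x ^ 2) + sU x * (2 * x ^ 3 - 6 * x) + x * sU x ^ 3).
Proof.
  intros x Hx.
  assert (Hz : 0 <= x^2 <= 987/400) by nra.
  pose proof (R_Yb (x^2) Hz) as HR.
  replace (- (cU x * (3 * sU x ^ 2 + 3 * x ^ 2) + sU x * (2 * x ^ 3 - 6 * x) + x * sU x ^ 3)) with ((/ 47784725839872000) * x ^ 10 * (80905355919360 + (-13563235123200)*(x^2) + 1107068497920*(x^2)^2 + (-58974676992)*(x^2)^3 + 2238026112*(x^2)^4 + (-62596800)*(x^2)^5 + 1294704*(x^2)^6 + (-19224)*(x^2)^7 + 189*(x^2)^8 + (-1)*(x^2)^9)) by (unfold sL, sU, cU; field).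
  apply Rmult_lt_0_compat; [apply Rmult_lt_0_compat; [lra | apply pow_lt; lra] | exact HR].
Qed.

Lemma pos_from_deriv (f f' : R -> R) (a b : R) :
  a < b -> f a = 0 ->
  (forall y, a <= y <= b -> derivable_pt_lim f y (f' y)) ->
  (forall y, a < y < b -> 0 < f' y) ->
  forall x, a < x <= b -> 0 < f x.
Proof.
  intros Hab Hfa Hd Hp x Hx.
  destruct (MVT_cor2 f f' a x (proj1 Hx)) as [c [Hc1 Hc2]].
  { intros y Hy. apply Hd. lra. }
  assert (0 < f' c) by (apply Hp; lra).
  assert (0 < f' c * (x - a)) by (apply Rmult_lt_0_compat; lra).
  lra.
Qed.

Lemma N_pos x : 0 < x <= PI / 2 -> 0 < sin x - x * cos x.
Proof.
  intros Hx.
  apply (pos_from_deriv (fun y => sin y - y * cos y) (fun y => y * sin y) 0 (PI/2)); auto; try lra.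
  - rewrite sin_0, cos_0. ring.
  - intros y _. apply is_derive_Reals. auto_derive; auto; try ring.
  - intros y Hy. apply Rmult_lt_0_compat; [lra|]. apply sin_gt_0; lra.
Qed.

Lemma T1_lem x : 0 < x < PI / 2 -> 0 < 2 * x * cos x ^ 2 + x - 3 * sin x * cos x.
Proof.
  intros Hx.
  apply (pos_from_deriv (fun y => 2 * y * cos y ^ 2 + y - 3 * sin y * cos y)
           (fun y => 4 * sin y * (sin y - y * cos y)) 0 (PI/2)); auto; try lra.
  - rewrite sin_0, cos_0. ring.
  - intros y _. apply is_derive_Reals. auto_derive; auto.
    pose proof (sin2_cos2 y). unfold Rsqr in H. nra.
  - intros y Hy. apply Rmult_lt_0_compat; [|apply N_pos; lra].
    assert (0 < sin y) by (apply sin_gt_0; lra). lra.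
Qed.

Lemma sinNpos u : 0 < u < PI -> 0 < sin u - u * cos u.
Proof.
  intros Hu. destruct (Rle_lt_dec u (PI/2)).
  - apply N_pos; lra.
  - assert (cos u <= 0) by (apply cos_le_0; lra).
    assert (0 < sin u) by (apply sin_gt_0; lra). nra.
Qed.

Definition Fq (u : R) := 4*u^2 - u^2 * cos u - 24 + 24 * cos u + 9 * u * sin u.

Lemma Fq_pos u : 0 < u < PI -> 0 < Fq u.
Proof.
  intros Hu. pose proof PI_RGT_0.
  assert (H3 : forall y, 0 < y <= PI -> 0 < 3 * sin y - 3 * y * cos y - y^2 * sin y).
  { intros y Hy. apply (pos_from_deriv (fun y => 3 * sin y - 3 * y * cos y - y^2 * sin y)
           (fun y => y * (sin y - y * cos y)) 0 PI); auto; try lra.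
    - rewrite sin_0, cos_0. ring.
    - intros z _. apply is_derive_Reals. auto_derive; auto; try ring.
    - intros z Hz. apply Rmult_lt_0_compat; [lra|]. apply sinNpos; lra. }
  assert (H2 : forall y, 0 < y <= PI -> 0 < 8 - 8 * cos y - 5 * y * sin y + y^2 * cos y).
  { intros y Hy. apply (pos_from_deriv (fun y => 8 - 8 * cos y - 5 * y * sin y + y^2 * cos y)
           (fun y => 3 * sin y - 3 * y * cos y - y^2 * sin y) 0 PI); auto; try lra.
    - rewrite sin_0, cos_0. ring.
    - intros z _. apply is_derive_Reals. auto_derive; auto; try ring.
    - intros z Hz. apply H3; lra. }
  assert (H1 : forall y, 0 < y <= PI -> 0 < 8 * y + 7 * y * cos y + y^2 * sin y - 15 * sin y).
  { intros y Hy. apply (pos_from_deriv (fun y => 8 * y + 7 * y * cos y + y^2 * sin y - 15 * sin y)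
           (fun y => 8 - 8 * cos y - 5 * y * sin y + y^2 * cos y) 0 PI); auto; try lra.
    - rewrite sin_0, cos_0. ring.
    - intros z _. apply is_derive_Reals. auto_derive; auto; try ring.
    - intros z Hz. apply H2; lra. }
  apply (pos_from_deriv Fq (fun y => 8 * y + 7 * y * cos y + y^2 * sin y - 15 * sin y) 0 PI); auto; try lra.
  - unfold Fq. rewrite sin_0, cos_0. ring.
  - intros z _. apply is_derive_Reals. unfold Fq. auto_derive; auto; try ring.
  - intros z Hz. apply H1; lra.
Qed.

Lemma T2_lem x : 0 < x < PI / 2 ->
  0 < 3 * (sin x - x * cos x)^2 - 15 * (sin x - x * cos x) * sin x + 5 * x^2 * sin x ^ 2.
Proof.
  intros Hx. pose proof (Fq_pos (2 * x) ltac:(lra)) as H.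
  unfold Fq in H. rewrite sin_2a, cos_2a in H.
  pose proof (sin2_cos2 x). unfold Rsqr in H0. nra.
Qed.
Lemma sL_pos x : 0 < x < 3927/2500 -> 0 < sL x.
Proof. intros Hx. unfold sL. assert (0 <= x^2 <= 987/400) by nra.
  assert (x^3 = x * x^2) by ring. assert (x^5 = x * (x^2)^2) by ring. assert (x^7 = x * (x^2)^3) by ring.
  rewrite H0, H1, H2. assert (0 < 1 - x^2/6 + (x^2)^2/120 - (x^2)^3/5040).
  { assert ((x^2)^3 <= (987/400)^3). { apply pow_incr. lra. } nra. }
  nra.
Qed.

Lemma trig_basic x : 0 < x < PI / 2 ->
  0 < sin x /\ 0 < cos x /\ sL x <= sin x <= sU x /\ cL x <= cos x <= cU x /\ x < 3927/2500.
Proof.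
  intros Hx. pose proof PI_RGT_0. pose proof PI2_ub.
  repeat split.
  - apply sin_gt_0; lra.
  - apply cos_gt_0; lra.
  - apply sin_taylor; lra.
  - apply sin_taylor; lra.
  - apply cos_taylor; lra.
  - apply cos_taylor; lra.
  - lra.
Qed.

Lemma Phi_pos x : 0 < x < PI / 2 ->
  0 < x * sin x ^ 3 + (81 - 36 * x ^ 2) * sin x ^ 2 * cos x - 57 * x * sin x * cos x ^ 2 - 24 * x ^ 2 * cos x ^ 3.
Proof.
  intros Hx. destruct (trig_basic x Hx) as (Hs & Hc & [HsL HsU] & [HcL HcU] & Hb).
  assert (HxB : 0 < x < 3927/2500) by lra.
  pose proof (P_F0 x HxB) as H0. pose proof (P_F1 x HxB) as H1. pose proof (P_F2 x HxB) as H2.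
  pose proof (sL_pos x HxB) as HsL0.
  set (S := sin x) in *. set (C := cos x) in *. set (a := sL x) in *. set (b := cU x) in *.
  assert (Hb0 : 0 < b) by lra.
  set (t := S / C). set (t0 := a / b).
  assert (Ht0 : t0 <= t).
  { unfold t, t0. apply Rle_trans with (a / C).
    - unfold Rdiv. apply Rmult_le_compat_l; [lra|]. apply Rinv_le_contravar; lra.
    - unfold Rdiv. apply Rmult_le_compat_r; [apply Rlt_le, Rinv_0_lt_compat; lra | lra]. }
  set (e := t - t0).
  set (A0 := x * t0^3 + (81 - 36 * x^2) * t0^2 - 57 * x * t0 - 24 * x^2).
  set (A1 := 3 * x * t0^2 + 2 * (81 - 36 * x^2) * t0 - 57 * x).
  set (A2 := 3 * x * t0 + (81 - 36 * x^2)).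
  assert (HA0 : 0 < A0).
  { assert (A0 = (x * a ^ 3 + (81 - 36 * x ^ 2) * a ^ 2 * b - 57 * x * a * b ^ 2 - 24 * x ^ 2 * b ^ 3) / b^3)
      by (unfold A0, t0; field; lra).
    rewrite H. apply Rdiv_lt_0_compat; [lra | apply pow_lt; lra]. }
  assert (HA1 : 0 <= A1).
  { assert (A1 = (3 * x * a ^ 2 + 2 * (81 - 36 * x ^ 2) * a * b - 57 * x * b ^ 2) / b^2)
      by (unfold A1, t0; field; lra).
    rewrite H. apply Rlt_le, Rdiv_lt_0_compat; [lra | apply pow_lt; lra]. }
  assert (HA2 : 0 <= A2).
  { assert (A2 = (3 * x * a + (81 - 36 * x ^ 2) * b) / b)
      by (unfold A2, t0; field; lra).
    rewrite H. apply Rlt_le, Rdiv_lt_0_compat; lra. }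
  assert (He : 0 <= e) by (unfold e; lra).
  assert (Hphi : x * t^3 + (81 - 36 * x^2) * t^2 - 57 * x * t - 24 * x^2 = A0 + A1 * e + A2 * e^2 + x * e^3)
    by (unfold e, A0, A1, A2; ring).
  assert (0 <= A1 * e) by (apply Rmult_le_pos; lra).
  assert (0 <= A2 * e^2) by (apply Rmult_le_pos; [lra | apply pow_le; lra]).
  assert (0 <= x * e^3) by (apply Rmult_le_pos; [lra | apply pow_le; lra]).
  assert (Hpt : 0 < x * t^3 + (81 - 36 * x^2) * t^2 - 57 * x * t - 24 * x^2) by lra.
  replace (x * S ^ 3 + (81 - 36 * x ^ 2) * S ^ 2 * C - 57 * x * S * C ^ 2 - 24 * x ^ 2 * C ^ 3)
    with (C^3 * (x * t^3 + (81 - 36 * x^2) * t^2 - 57 * x * t - 24 * x^2)) by (unfold t; field; lra).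
  apply Rmult_lt_0_compat; [apply pow_lt; lra | exact Hpt].
Qed.

Definition uu x := (sin x - x * cos x) / (x * sin x).

Lemma uu_pos x : 0 < x < PI / 2 -> 0 < uu x.
Proof.
  intros Hx. destruct (trig_basic x Hx) as (Hs & Hc & _).
  unfold uu. apply Rdiv_lt_0_compat; [apply N_pos; lra | nra].
Qed.

Lemma T4_lem x : 0 < x < PI / 2 ->
  24 * uu x - sin x / cos x + 35 / uu x - 105 / x < 0.
Proof.
  intros Hx. pose proof (Phi_pos x Hx) as HP. destruct (trig_basic x Hx) as (Hs & Hc & _).
  pose proof (N_pos x ltac:(lra)) as HN.
  unfold uu.
  set (S := sin x) in *. set (C := cos x) in *.
  replace (24 * ((S - x * C) / (x * S)) - S / C + 35 / ((S - x * C) / (x * S)) - 105 / x)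
    with (- (x * S ^ 3 + (81 - 36 * x ^ 2) * S ^ 2 * C - 57 * x * S * C ^ 2 - 24 * x ^ 2 * C ^ 3)
            / (C * x * S * (S - x * C))).
  2:{ field. repeat split; lra. }
  apply Ropp_lt_cancel. rewrite Ropp_0. unfold Rdiv. rewrite Ropp_mult_distr_l, Ropp_involutive.
  apply Rmult_lt_0_compat; [lra|]. apply Rinv_0_lt_compat.
  repeat apply Rmult_lt_0_compat; lra.
Qed.

Lemma Y_neg x : 0 < x < PI / 2 ->
  3 * cos x * sin x ^ 2 - 5 * x * sin x - x * sin x * cos x ^ 2 + 3 * x ^ 2 * cos x + 2 * x ^ 3 * sin x < 0.
Proof.
  intros Hx. destruct (trig_basic x Hx) as (Hs & Hc & [HsL HsU] & [HcL HcU] & Hb).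
  assert (HxB : 0 < x < 3927/2500) by lra.
  pose proof (P_Ya x HxB) as Ha. pose proof (P_Yb x HxB) as Hyb.
  pose proof (sL_pos x HxB) as HsL0.
  pose proof (sin2_cos2 x) as Hsc. unfold Rsqr in Hsc.
  set (S := sin x) in *. set (C := cos x) in *. set (a := sL x) in *. set (b := cU x) in *. set (d := sU x) in *.
  assert (E : 3 * C * S ^ 2 - 5 * x * S - x * S * C ^ 2 + 3 * x ^ 2 * C + 2 * x ^ 3 * S
             = C * (3 * S^2 + 3 * x^2) + S * (2 * x^3 - 6 * x) + x * S^3).
  { replace (C^2) with (1 - S^2) by nra. ring. }
  rewrite E.
  assert (E1 : C * (3 * S^2 + 3 * x^2) <= b * (3 * S^2 + 3 * x^2)).
  { apply Rmult_le_compat_r; nra. }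
  assert (E2 : b * (3 * d^2 + 3 * x^2) + d * (2 * x^3 - 6 * x) + x * d^3
              - (b * (3 * S^2 + 3 * x^2) + S * (2 * x^3 - 6 * x) + x * S^3)
             = (d - S) * (3 * b * (d + S) + 2 * x^3 - 6 * x + x * (d^2 + d * S + S^2))) by ring.
  assert (E3 : 3 * b * (d + a) + 2 * x ^ 3 - 6 * x + x * (d ^ 2 + d * a + a ^ 2)
               <= 3 * b * (d + S) + 2 * x^3 - 6 * x + x * (d^2 + d * S + S^2)).
  { assert (0 <= b) by lra. assert (x * (d^2 + d * a + a^2) <= x * (d^2 + d * S + S^2)).
    { apply Rmult_le_compat_l; [lra|]. nra. } nra. }
  assert (0 <= (d - S) * (3 * b * (d + S) + 2 * x^3 - 6 * x + x * (d^2 + d * S + S^2))).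
  { apply Rmult_le_pos; lra. }
  lra.
Qed.

Definition Nf y := sin y - y * cos y.
Definition Kf y := 3 * sin y / Nf y - y^2 * sin y ^ 2 / Nf y ^ 2.

Definition Yraw y := (3 * cos y * Nf y - 5 * y * sin y ^ 2 - 2 * y ^ 2 * sin y * cos y) * Nf y + 2 * y ^ 3 * sin y ^ 3.

Lemma K_deriv y : 0 < y <= PI / 2 -> derivable_pt_lim Kf y (Yraw y / Nf y ^ 3).
Proof.
  intros Hy. pose proof (N_pos y Hy) as HN. apply is_derive_Reals. unfold Kf, Yraw, Nf in *.
  auto_derive.
  - repeat split; try exact I; try lra; try (apply Rmult_integral_contrapositive_currified; [lra | rewrite Rmult_1_r; lra]).
  - field. lra.
Qed.

Lemma Yraw_neg y : 0 < y < PI / 2 -> Yraw y < 0.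
Proof.
  intros Hy. pose proof (Y_neg y Hy). pose proof (sin2_cos2 y) as Hsc. unfold Rsqr in Hsc.
  unfold Yraw, Nf.
  replace ((3 * cos y * (sin y - y * cos y) - 5 * y * sin y ^ 2 - 2 * y ^ 2 * sin y * cos y) *
     (sin y - y * cos y) + 2 * y ^ 3 * sin y ^ 3)
  with ((3 * cos y * sin y ^ 2 - 5 * y * sin y - y * sin y * cos y ^ 2 + 3 * y ^ 2 * cos y + 2 * y ^ 3 * sin y)
        + (sin y * sin y + cos y * cos y - 1) * (-5 * y * sin y + 3 * y^2 * cos y + 2 * y^3 * sin y)) by ring.
  rewrite Hsc. lra.
Qed.

Lemma K_gt x : 0 < x < PI / 2 -> 3 - PI^2/4 < Kf x.
Proof.
  intros Hx.
  destruct (MVT_cor2 Kf (fun y => Yraw y / Nf y ^ 3) x (PI/2) (proj2 Hx)) as [c [Hc1 Hc2]].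
  { intros y Hy. apply K_deriv. lra. }
  assert (HK2 : Kf (PI/2) = 3 - PI^2/4).
  { unfold Kf, Nf. rewrite sin_PI2, cos_PI2. field. }
  assert (Hd : Yraw c / Nf c ^ 3 < 0).
  { apply Rdiv_neg_pos; [apply Yraw_neg; lra | apply pow_lt; apply N_pos; lra]. }
  assert (Yraw c / Nf c ^ 3 * (PI / 2 - x) < 0) by (apply Rmult_neg_pos; lra).
  lra.
Qed.
Lemma mul_np a b : a <= 0 -> 0 <= b -> a * b <= 0.
Proof. intros; nra. Qed.

Definition Gx p q x := (2 - p) * uu x + (q - 1) * (sin x / cos x) + 1 / uu x - 3 / x.

Lemma T1u x : 0 < x < PI / 2 -> 3 * uu x < sin x / cos x.
Proof.
  intros Hx. pose proof (T1_lem x Hx) as H. destruct (trig_basic x Hx) as (Hs & Hc & _).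
  pose proof (sin2_cos2 x) as Hsc. unfold Rsqr in Hsc.
  unfold uu. apply Rminus_lt_0.
  replace (sin x / cos x - 3 * ((sin x - x * cos x) / (x * sin x)))
    with ((2 * x * cos x ^ 2 + x - 3 * sin x * cos x) / (x * sin x * cos x)).
  2:{ replace (sin x / cos x - 3 * ((sin x - x * cos x) / (x * sin x)))
        with ((x * sin x ^ 2 - 3 * sin x * cos x + 3 * x * cos x ^ 2) / (x * sin x * cos x)) by (field; repeat split; lra).
        replace (sin x ^ 2) with (1 - cos x ^ 2) by nra. field. repeat split; lra. }
  apply Rdiv_lt_0_compat; [lra|]. repeat apply Rmult_lt_0_compat; lra.
Qed.

Lemma T2u x : 0 < x < PI / 2 -> 0 < 3/5 * uu x + 1 / uu x - 3 / x.
Proof.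
  intros Hx. pose proof (T2_lem x Hx) as H. destruct (trig_basic x Hx) as (Hs & Hc & _).
  pose proof (N_pos x ltac:(lra)) as HN.
  unfold uu.
  replace (3 / 5 * ((sin x - x * cos x) / (x * sin x)) + 1 / ((sin x - x * cos x) / (x * sin x)) - 3 / x)
    with ((3 * (sin x - x * cos x)^2 - 15 * (sin x - x * cos x) * sin x + 5 * x^2 * sin x ^ 2)
           / (5 * x * sin x * (sin x - x * cos x))) by (field; repeat split; lra).
  apply Rdiv_lt_0_compat; [lra|]. repeat apply Rmult_lt_0_compat; lra.
Qed.

Lemma sign_i p q x : 1 <= q -> p <= 3 * q - 8/5 -> 0 < x < PI / 2 -> 0 < Gx p q x.
Proof.
  intros Hq Hp Hx. pose proof (uu_pos x Hx). pose proof (T1u x Hx). pose proof (T2u x Hx).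
  unfold Gx.
  assert (0 <= (3 * q - 8/5 - p) * uu x) by (apply Rmult_le_pos; lra).
  assert (0 <= (q - 1) * (sin x / cos x - 3 * uu x)) by (apply Rmult_le_pos; lra).
  lra.
Qed.

Lemma sign_iii p q x : q <= 34/35 -> 3 * q - 8/5 <= p -> 0 < x < PI / 2 -> Gx p q x < 0.
Proof.
  intros Hq Hp Hx. pose proof (uu_pos x Hx). pose proof (T1u x Hx). pose proof (T4_lem x Hx).
  unfold Gx.
  assert ((3 * q - 8/5 - p) * uu x <= 0) by (apply mul_np; lra).
  assert ((q - 34/35) * (sin x / cos x - 3 * uu x) <= 0) by (apply mul_np; lra).
  assert (E : (2 - p) * uu x + (q - 1) * (sin x / cos x) + 1 / uu x - 3 / x
    = (3 * q - 8/5 - p) * uu x + (q - 34/35) * (sin x / cos x - 3 * uu x)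
      + / 35 * (24 * uu x - sin x / cos x + 35 / uu x - 105 / x)) by (destruct (trig_basic x Hx) as (Hs & Hc & _); field; repeat split; lra).
  rewrite E. lra.
Qed.

Lemma sign_ii p q x : q <= 1 -> PI^2/4 - 1 <= p -> 0 < x < PI / 2 -> Gx p q x < 0.
Proof.
  intros Hq Hp Hx. pose proof (uu_pos x Hx) as Hu. pose proof (K_gt x Hx) as HK.
  destruct (trig_basic x Hx) as (Hs & Hc & _).
  pose proof (N_pos x ltac:(lra)) as HN.
  assert (Ht : 0 < sin x / cos x) by (apply Rdiv_lt_0_compat; lra).
  assert ((q - 1) * (sin x / cos x) <= 0) by (apply mul_np; lra).
  assert (H2 : (2 - p) * uu x + 1 / uu x - 3 / x < 0).
  { unfold Kf, Nf in HK. unfold uu in *.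
    set (N := sin x - x * cos x) in *. set (S := sin x) in *.
    assert (HK' : (2 - p) * N^2 < 3 * S * N - x^2 * S^2).
    { assert (2 - p < 3 * S / N - x ^ 2 * S ^ 2 / N ^ 2) by lra.
      apply Rmult_lt_compat_r with (r := N^2) in H0; [|apply pow_lt; lra].
      replace ((3 * S / N - x ^ 2 * S ^ 2 / N ^ 2) * N ^ 2) with (3 * S * N - x^2 * S^2) in H0 by (field; lra).
      lra. }
    replace ((2 - p) * (N / (x * S)) + 1 / (N / (x * S)) - 3 / x)
      with (((2 - p) * N^2 - 3 * S * N + x^2 * S^2) / (x * S * N)) by (field; repeat split; lra).
    apply Rdiv_neg_pos; [lra|]. repeat apply Rmult_lt_0_compat; lra. }
  unfold Gx. lra.
Qed.
Definition lim0 (h : R -> R) (l : R) :=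
  forall eps, 0 < eps -> exists d, 0 < d /\ forall y, 0 < y < d -> Rabs (h y - l) < eps.
Definition limb (h : R -> R) (b l : R) :=
  forall eps, 0 < eps -> exists d, 0 < d /\ forall y, b - d < y < b -> Rabs (h y - l) < eps.

Lemma incr_deriv h h' a b :
  (forall y, a < y < b -> derivable_pt_lim h y (h' y)) ->
  (forall y, a < y < b -> 0 < h' y) -> forall y z, a < y -> y < z -> z < b -> h y < h z.
Proof.
  intros Hd Hp y z Hy Hyz Hz.
  destruct (MVT_cor2 h h' y z Hyz) as [c [Hc1 Hc2]].
  { intros w Hw. apply Hd. lra. }
  assert (0 < h' c) by (apply Hp; lra).
  assert (0 < h' c * (z - y)) by (apply Rmult_lt_0_compat; lra). lra.
Qed.

Lemma decr_deriv h h' a b :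
  (forall y, a < y <= b -> derivable_pt_lim h y (h' y)) ->
  (forall y, a < y < b -> h' y < 0) -> forall y z, a < y -> y < z -> z <= b -> h z < h y.
Proof.
  intros Hd Hp y z Hy Hyz Hz.
  destruct (MVT_cor2 h h' y z Hyz) as [c [Hc1 Hc2]].
  { intros w Hw. apply Hd. lra. }
  assert (h' c < 0) by (apply Hp; lra).
  assert (h' c * (z - y) < 0) by (apply Rmult_neg_pos; lra). lra.
Qed.

Lemma lim0_incr h l b : 0 < b -> (forall y z, 0 < y -> y < z -> z < b -> h y < h z) -> lim0 h l ->
  forall y, 0 < y < b -> l < h y.
Proof.
  intros Hb Hm Hl y Hy.
  assert (Hle : l <= h (y/2)).
  { destruct (Rle_lt_dec l (h (y/2))) as [h1|h1]; auto. exfalso.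
    destruct (Hl (l - h (y/2)) ltac:(lra)) as [d [Hd Hd']].
    set (z := Rmin d (y/2) / 2).
    assert (Hz : 0 < z < d /\ z < y/2).
    { unfold z. pose proof (Rmin_l d (y/2)). pose proof (Rmin_r d (y/2)).
      assert (0 < Rmin d (y/2)) by (apply Rmin_pos; lra). lra. }
    specialize (Hd' z ltac:(lra)). assert (h z < h (y/2)) by (apply Hm; lra).
    apply Rabs_def2 in Hd'. lra. }
  assert (h (y/2) < h y) by (apply Hm; lra). lra.
Qed.

Lemma lim0_decr h l b : 0 < b -> (forall y z, 0 < y -> y < z -> z < b -> h z < h y) -> lim0 h l ->
  forall y, 0 < y < b -> h y < l.
Proof.
  intros Hb Hm Hl y Hy.
  assert (lim0 (fun t => - h t) (- l)).
  { intros eps He. destruct (Hl eps He) as [d [Hd Hd']]. exists d. split; auto.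
    intros z Hz. specialize (Hd' z Hz). rewrite <- Rabs_Ropp. replace (- (- h z - - l)) with (h z - l) by ring. auto. }
  assert (- l < - h y).
  { apply (lim0_incr (fun t => - h t) (- l) b); auto. intros a c Ha Hac Hc. specialize (Hm a c Ha Hac Hc). lra. }
  lra.
Qed.

Lemma limb_incr h l b : 0 < b -> (forall y z, 0 < y -> y < z -> z < b -> h y < h z) -> limb h b l ->
  forall y, 0 < y < b -> h y < l.
Proof.
  intros Hb Hm Hl y Hy.
  set (y2 := (y + b) / 2).
  assert (Hle : h y2 <= l).
  { destruct (Rle_lt_dec (h y2) l) as [h1|h1]; auto. exfalso.
    destruct (Hl (h y2 - l) ltac:(lra)) as [d [Hd Hd']].
    set (z := b - Rmin d (b - y2) / 2).
    assert (Hz : b - d < z < b /\ y2 < z).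
    { unfold z. pose proof (Rmin_l d (b - y2)). pose proof (Rmin_r d (b - y2)).
      assert (0 < Rmin d (b - y2)) by (apply Rmin_pos; unfold y2; lra). lra. }
    specialize (Hd' z ltac:(lra)). assert (h y2 < h z) by (apply Hm; unfold y2 in *; lra).
    apply Rabs_def2 in Hd'. lra. }
  assert (h y < h y2) by (apply Hm; unfold y2; lra). lra.
Qed.

Lemma limb_incr2 h l a b : a < b -> (forall y z, a <= y -> y < z -> z < b -> h y < h z) -> limb h b l ->
  forall y, a <= y < b -> h y < l.
Proof.
  intros Hb Hm Hl y Hy.
  set (y2 := (y + b) / 2).
  assert (Hle : h y2 <= l).
  { destruct (Rle_lt_dec (h y2) l) as [h1|h1]; auto. exfalso.
    destruct (Hl (h y2 - l) ltac:(lra)) as [d [Hd Hd']].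
    set (z := b - Rmin d (b - y2) / 2).
    assert (Hz : b - d < z < b /\ y2 < z).
    { unfold z. pose proof (Rmin_l d (b - y2)). pose proof (Rmin_r d (b - y2)).
      assert (0 < Rmin d (b - y2)) by (apply Rmin_pos; unfold y2; lra). lra. }
    specialize (Hd' z ltac:(lra)). assert (h y2 < h z) by (apply Hm; unfold y2 in *; lra).
    apply Rabs_def2 in Hd'. lra. }
  assert (h y < h y2) by (apply Hm; unfold y2; lra). lra.
Qed.

Lemma lim0_lin f g a c k : lim0 f a -> lim0 g c -> lim0 (fun y => f y - k * g y) (a - k * c).
Proof.
  intros Hf Hg eps He.
  destruct (Hf (eps/2) ltac:(lra)) as [d1 [Hd1 H1]].
  destruct (Hg (eps / (2 * (Rabs k + 1)))) as [d2 [Hd2 H2]].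
  { apply Rdiv_lt_0_compat; [lra|]. pose proof (Rabs_pos k). lra. }
  exists (Rmin d1 d2). split; [apply Rmin_pos; lra|].
  intros y Hy. pose proof (Rmin_l d1 d2). pose proof (Rmin_r d1 d2).
  specialize (H1 y ltac:(lra)). specialize (H2 y ltac:(lra)).
  replace (f y - k * g y - (a - k * c)) with ((f y - a) - k * (g y - c)) by ring.
  assert (HB : 0 < eps / (2 * (Rabs k + 1))) by (apply Rdiv_lt_0_compat; pose proof (Rabs_pos k); lra).
  assert (Rabs k * Rabs (g y - c) <= Rabs k * (eps / (2 * (Rabs k + 1)))).
  { apply Rmult_le_compat_l; [apply Rabs_pos | lra]. }
  assert ((Rabs k + 1) * (eps / (2 * (Rabs k + 1))) = eps / 2).
  { field. pose proof (Rabs_pos k). lra. }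
  assert (Hk : Rabs (k * (g y - c)) < eps / 2) by (rewrite Rabs_mult; lra).
  apply Rabs_def2 in Hk. apply Rabs_def2 in H1. apply Rabs_def1; lra.
Qed.

Lemma limb_lin f g a c k b : limb f b a -> limb g b c -> limb (fun y => f y - k * g y) b (a - k * c).
Proof.
  intros Hf Hg eps He.
  destruct (Hf (eps/2) ltac:(lra)) as [d1 [Hd1 H1]].
  destruct (Hg (eps / (2 * (Rabs k + 1)))) as [d2 [Hd2 H2]].
  { apply Rdiv_lt_0_compat; [lra|]. pose proof (Rabs_pos k). lra. }
  exists (Rmin d1 d2). split; [apply Rmin_pos; lra|].
  intros y Hy. pose proof (Rmin_l d1 d2). pose proof (Rmin_r d1 d2).
  specialize (H1 y ltac:(lra)). specialize (H2 y ltac:(lra)).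
  replace (f y - k * g y - (a - k * c)) with ((f y - a) - k * (g y - c)) by ring.
  assert (HB : 0 < eps / (2 * (Rabs k + 1))) by (apply Rdiv_lt_0_compat; pose proof (Rabs_pos k); lra).
  assert (Rabs k * Rabs (g y - c) <= Rabs k * (eps / (2 * (Rabs k + 1)))).
  { apply Rmult_le_compat_l; [apply Rabs_pos | lra]. }
  assert ((Rabs k + 1) * (eps / (2 * (Rabs k + 1))) = eps / 2).
  { field. pose proof (Rabs_pos k). lra. }
  assert (Hk : Rabs (k * (g y - c)) < eps / 2) by (rewrite Rabs_mult; lra).
  apply Rabs_def2 in Hk. apply Rabs_def2 in H1. apply Rabs_def1; lra.
Qed.

Section Generic.
Variables (b L0 : R) (f g g' m : R -> R).
Hypothesis Hb : 0 < b.
Hypothesis Hf : forall y, 0 < y < b -> derivable_pt_lim f y (g' y * m y).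
Hypothesis Hg : forall y, 0 < y < b -> derivable_pt_lim g y (g' y).
Hypothesis Hg' : forall y, 0 < y < b -> 0 < g' y.
Hypothesis Hm : forall y z, 0 < y -> y < z -> z < b -> m y < m z.
Hypothesis Hf0 : lim0 f 0.
Hypothesis Hg0 : lim0 g 0.
Hypothesis Hm0 : lim0 m L0.

Lemma lin_deriv k y : 0 < y < b -> derivable_pt_lim (fun t => f t - k * g t) y (g' y * (m y - k)).
Proof.
  intros Hy. replace (g' y * (m y - k)) with (g' y * m y - k * g' y) by ring.
  apply derivable_pt_lim_minus; [apply Hf; auto|].
  apply derivable_pt_lim_scal. apply Hg; auto.
Qed.

Lemma gen_g_pos x : 0 < x < b -> 0 < g x.
Proof.
  intros Hx.
  apply (lim0_incr g 0 b Hb); auto.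
  intros y z Hy Hyz Hz. apply (incr_deriv g g' 0 b); auto.
Qed.

Lemma gen_lower x : 0 < x < b -> L0 * g x < f x.
Proof.
  intros Hx.
  assert (Hmy : forall y, 0 < y < b -> L0 < m y) by (intros; apply (lim0_incr m L0 b); auto).
  assert (0 < f x - L0 * g x).
  { apply (lim0_incr (fun t => f t - L0 * g t) 0 b Hb); auto.
    - intros y z Hy Hyz Hz. apply (incr_deriv (fun t => f t - L0 * g t) (fun t => g' t * (m t - L0)) 0 b); auto.
      + intros w Hw. apply lin_deriv; auto.
      + intros w Hw. apply Rmult_lt_0_compat; [apply Hg'; auto | specialize (Hmy w Hw); lra].
    - replace 0 with (0 - L0 * 0) by ring. apply lim0_lin; auto. }
  lra.
Qed.

Lemma gen_upper x : 0 < x < b -> f x < m x * g x.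
Proof.
  intros Hx.
  set (h := fun t => f t - m x * g t).
  assert (Hdec : forall y z, 0 < y -> y < z -> z <= x -> h z < h y).
  { apply (decr_deriv h (fun t => g' t * (m t - m x)) 0 x).
    - intros w Hw. apply lin_deriv; lra.
    - intros w Hw. apply Rmult_pos_neg; [apply Hg'; lra|]. assert (m w < m x) by (apply Hm; lra). lra. }
  assert (Hl : lim0 h 0) by (unfold h; replace 0 with (0 - m x * 0) by ring; apply lim0_lin; auto).
  assert (h (x/2) < 0).
  { apply (lim0_decr h 0 x); auto; try lra. intros y z Hy Hyz Hz. apply Hdec; lra. }
  assert (h x < h (x/2)) by (apply Hdec; lra).
  unfold h in *. lra.
Qed.

Lemma gen_bc0 c : L0 < c -> exists x, 0 < x < b /\ f x < c * g x.
Proof.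
  intros Hc. destruct (Hm0 (c - L0) ltac:(lra)) as [d [Hd Hd']].
  set (x := Rmin d b / 2).
  assert (Hx : 0 < x < d /\ x < b).
  { unfold x. pose proof (Rmin_l d b). pose proof (Rmin_r d b). assert (0 < Rmin d b) by (apply Rmin_pos; lra). lra. }
  exists x. split; [lra|].
  specialize (Hd' x ltac:(lra)). apply Rabs_def2 in Hd'.
  pose proof (gen_upper x ltac:(lra)). pose proof (gen_g_pos x ltac:(lra)).
  assert (m x * g x < c * g x) by (apply Rmult_lt_compat_r; lra). lra.
Qed.

Variables (F1 G1 : R).
Hypothesis HfB : limb f b F1.
Hypothesis HgB : limb g b G1.
Hypothesis HG1 : 0 < G1.

Lemma gen_kappa x : 0 < x < b -> f x < F1 / G1 * g x.
Proof.
  intros Hx. set (k := F1 / G1). set (h := fun t => f t - k * g t).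
  assert (Hd : forall y, 0 < y < b -> derivable_pt_lim h y (g' y * (m y - k))) by (intros; apply lin_deriv; auto).
  destruct (Rle_lt_dec (m x) k) as [Hmk|Hmk].
  - assert (Hdec : forall y z, 0 < y -> y < z -> z <= x -> h z < h y).
    { apply (decr_deriv h (fun t => g' t * (m t - k)) 0 x).
      - intros w Hw. apply Hd; lra.
      - intros w Hw. apply Rmult_pos_neg; [apply Hg'; lra|]. assert (m w < m x) by (apply Hm; lra). lra. }
    assert (Hl : lim0 h 0) by (unfold h; replace 0 with (0 - k * 0) by ring; apply lim0_lin; auto).
    assert (h (x/2) < 0).
    { apply (lim0_decr h 0 x); auto; try lra. intros y z Hy Hyz Hz. apply Hdec; lra. }
    assert (h x < h (x/2)) by (apply Hdec; lra).
    unfold h in *. lra.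
  - assert (Hinc : forall y z, x <= y -> y < z -> z < b -> h y < h z).
    { intros y z Hy Hyz Hz. destruct (MVT_cor2 h (fun t => g' t * (m t - k)) y z Hyz) as [c [Hc1 Hc2]].
      { intros w Hw. apply Hd; lra. }
      assert (m x <= m c) by (destruct (Req_dec x c); [subst; lra| apply Rlt_le, Hm; lra]).
      assert (0 < g' c * (m c - k)) by (apply Rmult_lt_0_compat; [apply Hg'; lra | lra]).
      assert (0 < g' c * (m c - k) * (z - y)) by (apply Rmult_lt_0_compat; lra). lra. }
    assert (Hl : limb h b 0).
    { unfold h. replace 0 with (F1 - k * G1) by (unfold k; field; lra). apply limb_lin; auto. }
    assert (h x < 0) by (apply (limb_incr2 h 0 x b); auto; lra).
    unfold h in *. lra.
Qed.
End Generic.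

Lemma gen_bcb b f g F1 G1 c : 0 < b -> limb f b F1 -> limb g b G1 -> 0 < G1 -> c < F1 / G1 ->
  ~ (forall x, 0 < x < b -> f x < c * g x).
Proof.
  intros Hb HfB HgB HG1 Hc H.
  assert (HcG : c * G1 < F1).
  { apply Rmult_lt_compat_r with (r := G1) in Hc; auto.
    replace (F1 / G1 * G1) with F1 in Hc by (field; lra). lra. }
  pose proof (limb_lin f g F1 G1 c b HfB HgB) as Hl.
  destruct (Hl (F1 - c * G1) ltac:(lra)) as [d [Hd Hd']].
  set (y := b - Rmin d b / 2).
  assert (Hy : b - d < y < b /\ 0 < y).
  { unfold y. pose proof (Rmin_l d b). pose proof (Rmin_r d b). assert (0 < Rmin d b) by (apply Rmin_pos; lra). lra. }
  specialize (Hd' y ltac:(lra)). specialize (H y ltac:(lra)).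
  apply Rabs_def2 in Hd'. lra.
Qed.
Lemma Rpower_one a : Rpower 1 a = 1.
Proof. unfold Rpower. rewrite ln_1, Rmult_0_r. apply exp_0. Qed.

Lemma U_one p : U p 1 = 0.
Proof. unfold U. destruct (Req_EM_T p 0). - rewrite ln_1. ring. - rewrite Rpower_one. field. auto. Qed.

Lemma U_deriv p t : 0 < t -> derivable_pt_lim (U p) t (- Rpower t (p - 1)).
Proof.
  intros Ht. destruct (Req_EM_T p 0) as [e|ne].
  - subst p. apply (derivable_pt_lim_ext (fun x => - ln x)).
    + intros x. unfold U. destruct (Req_EM_T 0 0); [reflexivity | contradiction].
    + apply is_derive_Reals. unfold Rpower. auto_derive; auto.
      replace ((0 - 1) * ln t) with (- ln t) by ring. rewrite exp_Ropp, exp_ln; auto. field. lra.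
  - apply (derivable_pt_lim_ext (fun x => (1 - exp (p * ln x)) / p)).
    + intros x. unfold U. destruct (Req_EM_T p 0); [contradiction | reflexivity].
    + apply is_derive_Reals. unfold Rpower. auto_derive; auto.
      replace ((p - 1) * ln t) with (p * ln t + - ln t) by ring. rewrite exp_plus, exp_Ropp, exp_ln; auto.
      field. split; lra.
Qed.

Lemma U_cont p t : 0 < t -> continuity_pt (U p) t.
Proof. intros Ht. apply derivable_continuous_pt. exists (- Rpower t (p - 1)). apply U_deriv; auto. Qed.

Definition fF p y := U p (sin y / y).
Definition gG q y := U q (cos y).
Definition gD q y := Rpower (cos y) (q - 1) * sin y.
Definition Lf p q y := (p - 1) * ln (sin y / y) + (1 - q) * ln (cos y) + ln (sin y - y * cos y) - ln (y^2 * sin y).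
Definition mM p q y := exp (Lf p q y).

Lemma sinc_pos y : 0 < y < PI -> 0 < sin y / y.
Proof. intros Hy. apply Rdiv_lt_0_compat; [apply sin_gt_0|]; lra. Qed.

Lemma fF_deriv_raw p y : 0 < y < PI ->
  derivable_pt_lim (fF p) y (- Rpower (sin y / y) (p - 1) * ((y * cos y - sin y) / y^2)).
Proof.
  intros Hy. unfold fF.
  change (fun y0 => U p (sin y0 / y0)) with (comp (U p) (fun y0 => sin y0 / y0)).
  apply derivable_pt_lim_comp.
  - apply is_derive_Reals. auto_derive; [lra|]. field. lra.
  - apply U_deriv. apply sinc_pos; auto.
Qed.

Lemma gG_deriv q y : 0 < y < PI / 2 -> derivable_pt_lim (gG q) y (gD q y).
Proof.
  intros Hy. unfold gG, gD.
  change (fun y0 => U q (cos y0)) with (comp (U q) cos).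
  replace (Rpower (cos y) (q - 1) * sin y) with ((- Rpower (cos y) (q - 1)) * (- sin y)) by ring.
  apply derivable_pt_lim_comp.
  - apply derivable_pt_lim_cos.
  - apply U_deriv. apply cos_gt_0; lra.
Qed.

Lemma mM_eq p q y : 0 < y < PI / 2 ->
  mM p q y = Rpower (sin y / y) (p - 1) * Rpower (cos y) (1 - q) * ((sin y - y * cos y) / (y^2 * sin y)).
Proof.
  intros Hy. destruct (trig_basic y Hy) as (Hs & Hc & _). pose proof (N_pos y ltac:(lra)) as HN.
  unfold mM, Lf, Rpower.
  match goal with |- exp (?a + ?b + ?c - ?d) = _ => replace (a + b + c - d) with (a + b + c + - d) by ring end.
  rewrite !exp_plus, exp_Ropp, !exp_ln; auto.
  - field. split; lra.
  - apply Rmult_lt_0_compat; [apply pow_lt|]; lra.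
Qed.

Lemma fF_deriv p q y : 0 < y < PI / 2 -> derivable_pt_lim (fF p) y (gD q y * mM p q y).
Proof.
  intros Hy. destruct (trig_basic y Hy) as (Hs & Hc & _).
  replace (gD q y * mM p q y) with (- Rpower (sin y / y) (p - 1) * ((y * cos y - sin y) / y^2)).
  - apply fF_deriv_raw. pose proof PI_RGT_0. lra.
  - rewrite mM_eq; auto. unfold gD.
    replace (Rpower (cos y) (q - 1) * sin y * (Rpower (sin y / y) (p - 1) * Rpower (cos y) (1 - q) * ((sin y - y * cos y) / (y ^ 2 * sin y))))
      with ((Rpower (cos y) (q - 1) * Rpower (cos y) (1 - q)) * Rpower (sin y / y) (p - 1) * ((sin y - y * cos y) / y ^ 2))
      by (field; split; lra).
    rewrite <- Rpower_plus. replace (q - 1 + (1 - q)) with 0 by ring. rewrite Rpower_O; auto.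
    field. lra.
Qed.

Lemma Lf_deriv p q y : 0 < y < PI / 2 -> derivable_pt_lim (Lf p q) y (Gx p q y).
Proof.
  intros Hy. destruct (trig_basic y Hy) as (Hs & Hc & _). pose proof (N_pos y ltac:(lra)) as HN.
  apply is_derive_Reals. unfold Lf, Gx, uu. auto_derive.
  - repeat split; try exact I; try lra.
    + apply Rmult_lt_0_compat; [lra | apply Rinv_0_lt_compat; lra].
    + apply Rmult_lt_0_compat; [nra | lra].
  - field. repeat split; lra.
Qed.

Lemma mM_incr p q : (forall x, 0 < x < PI / 2 -> 0 < Gx p q x) ->
  forall y z, 0 < y -> y < z -> z < PI / 2 -> mM p q y < mM p q z.
Proof.
  intros HG y z Hy Hyz Hz. unfold mM. apply exp_increasing.
  apply (incr_deriv (Lf p q) (Gx p q) 0 (PI/2)); auto.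
  intros w Hw. apply Lf_deriv; auto.
Qed.

Lemma mM_decr p q : (forall x, 0 < x < PI / 2 -> Gx p q x < 0) ->
  forall y z, 0 < y -> y < z -> z < PI / 2 -> - mM p q y < - mM p q z.
Proof.
  intros HG y z Hy Hyz Hz. apply Ropp_lt_contravar. unfold mM. apply exp_increasing.
  apply (decr_deriv (Lf p q) (Gx p q) 0 z); auto.
  - intros w Hw. apply Lf_deriv; lra.
  - intros w Hw. apply HG; lra.
  - lra.
Qed.
Lemma mul_np' a b : 0 <= a -> b <= 0 -> a * b <= 0.
Proof. intros; nra. Qed.

Lemma small_bounds y : 0 < y <= 1 ->
  y - y^3/6 <= sin y <= y /\ 1 - y^2/2 <= cos y <= 1.
Proof.
  intros Hy. pose proof PI_RGT_0. pose proof PI2_3_2.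
  destruct (sin_taylor y ltac:(lra)). destruct (cos_taylor y ltac:(lra)).
  assert (Hz : 0 <= y^2 <= 1) by nra. remember (y^2) as z eqn:Ez.
  assert (E1 : sL y = y - y^3/6 + y * (z * z) * (1/120 - z/5040)) by (unfold sL; subst z; field).
  assert (E2 : sU y = y + y * z * (-1/6 + z/120 - z*z/5040 + z*z*z/362880)) by (unfold sU; subst z; field).
  assert (E3 : cL y = 1 - y^2/2 + z * z * (1/24 - z/720)) by (unfold cL; subst z; field).
  assert (E4 : cU y = 1 + z * (-1/2 + z/24 - z*z/720 + z*z*z/40320)) by (unfold cU; subst z; field).
  assert (0 <= z * z) by nra. assert (0 <= y * (z * z)) by (apply Rmult_le_pos; lra). assert (0 <= y * z) by (apply Rmult_le_pos; lra).
  assert (0 <= y * (z * z) * (1/120 - z/5040)) by (apply Rmult_le_pos; lra).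
  assert (y * z * (-1/6 + z/120 - z*z/5040 + z*z*z/362880) <= 0).
  { apply mul_np'; [lra|]. assert (z*z*z <= 1) by nra. nra. }
  assert (0 <= z * z * (1/24 - z/720)) by (apply Rmult_le_pos; lra).
  assert (z * (-1/2 + z/24 - z*z/720 + z*z*z/40320) <= 0).
  { apply mul_np'; [lra|]. assert (z*z*z <= 1) by nra. nra. }
  repeat split; lra.
Qed.

Lemma lim0_ext h1 h2 l d0 : 0 < d0 -> (forall y, 0 < y < d0 -> h1 y = h2 y) -> lim0 h1 l -> lim0 h2 l.
Proof.
  intros Hd0 He Hl eps Heps. destruct (Hl eps Heps) as [d [Hd Hd']].
  exists (Rmin d d0). split; [apply Rmin_pos; lra|]. intros y Hy.
  pose proof (Rmin_l d d0). pose proof (Rmin_r d d0).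
  rewrite <- He by lra. apply Hd'. lra.
Qed.

Lemma lim0_comp_cont k h l : lim0 k l -> continuity_pt h l -> lim0 (fun y => h (k y)) (h l).
Proof.
  intros Hk Hh eps Heps.
  unfold continuity_pt, continue_in, limit1_in, limit_in in Hh.
  destruct (Hh eps Heps) as [a [Ha Ha']]. simpl in Ha'. unfold R_dist in Ha'.
  destruct (Hk a Ha) as [d [Hd Hd']]. exists d. split; auto.
  intros y Hy. destruct (Req_dec (k y) l) as [e|ne].
  - rewrite e. replace (h l - h l) with 0 by ring. rewrite Rabs_R0. auto.
  - apply Ha'. split; [split; [exact I| auto] | apply Hd'; auto].
Qed.

Lemma lim0_sinc : lim0 (fun y => sin y / y) 1.
Proof.
  intros eps He. exists (Rmin 1 eps). split; [apply Rmin_pos; lra|].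
  intros y Hy. pose proof (Rmin_l 1 eps). pose proof (Rmin_r 1 eps).
  destruct (small_bounds y ltac:(lra)) as [[H1 H2] _].
  assert (Hr : sin y = (sin y / y) * y) by (field; lra).
  set (r := sin y / y) in *.
  assert (r <= 1) by nra. assert (1 - y^2/6 <= r) by nra. assert (y^2 <= y) by nra.
  apply Rabs_def1; lra.
Qed.

Lemma lim0_cos : lim0 cos 1.
Proof.
  intros eps He. exists (Rmin 1 eps). split; [apply Rmin_pos; lra|].
  intros y Hy. pose proof (Rmin_l 1 eps). pose proof (Rmin_r 1 eps).
  destruct (small_bounds y ltac:(lra)) as [_ [H1 H2]].
  assert (y^2 <= y) by nra.
  apply Rabs_def1; lra.
Qed.

Lemma lim0_fF p : lim0 (fF p) 0.
Proof.
  rewrite <- (U_one p). unfold fF.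
  apply (lim0_comp_cont (fun y => sin y / y) (U p) 1 lim0_sinc). apply U_cont; lra.
Qed.

Lemma lim0_gG q : lim0 (gG q) 0.
Proof.
  rewrite <- (U_one q). unfold gG.
  apply (lim0_comp_cont cos (U q) 1 lim0_cos). apply U_cont; lra.
Qed.

Lemma lim0_iff h l : lim0 h l <-> limit1_in h (fun y => 0 < y) l 0.
Proof.
  unfold lim0, limit1_in, limit_in. simpl. unfold R_dist. split.
  - intros H eps He. destruct (H eps He) as [d [Hd Hd']]. exists d. split; auto.
    intros x [Hx1 Hx2]. apply Hd'. rewrite Rminus_0_r in Hx2. rewrite Rabs_right in Hx2 by lra. lra.
  - intros H eps He. destruct (H eps He) as [d [Hd Hd']]. exists d. split; auto.
    intros x Hx. apply Hd'. split; [lra|]. rewrite Rminus_0_r, Rabs_right by lra. lra.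
Qed.

Lemma lim0_mul h1 h2 l1 l2 : lim0 h1 l1 -> lim0 h2 l2 -> lim0 (fun y => h1 y * h2 y) (l1 * l2).
Proof.
  rewrite !lim0_iff. intros. apply limit_mul; auto.
Qed.

Lemma lim0_R : lim0 (fun y => (sin y - y * cos y) / (y^2 * sin y)) (1/3).
Proof.
  intros eps He. exists (Rmin 1 eps). split; [apply Rmin_pos; lra|].
  intros y Hy. pose proof (Rmin_l 1 eps). pose proof (Rmin_r 1 eps).
  assert (Hy1 : 0 < y <= 1) by lra.
  destruct (small_bounds y Hy1) as [[H1 H2] [H3 H4]].
  pose proof PI2_3_2.
  destruct (sin_taylor y ltac:(pose proof PI_RGT_0; lra)) as [Hs1 Hs2].
  destruct (cos_taylor y ltac:(pose proof PI_RGT_0; lra)) as [Hc1 Hc2].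
  assert (Hs : 0 < sin y) by (apply sin_gt_0; lra).
  set (S := sin y) in *. set (C := cos y) in *.
  set (D := 3 * S - 3 * y * C - y^2 * S).
  assert (Hy2 : 0 < 3 - y^2) by nra.
  assert (DL : sL y * (3 - y^2) - 3 * y * cU y <= D).
  { unfold D. assert (sL y * (3 - y^2) <= S * (3 - y^2)) by (apply Rmult_le_compat_r; lra).
    assert (3 * y * C <= 3 * y * cU y) by (apply Rmult_le_compat_l; lra). lra. }
  assert (DU : D <= sU y * (3 - y^2) - 3 * y * cL y).
  { unfold D. assert (S * (3 - y^2) <= sU y * (3 - y^2)) by (apply Rmult_le_compat_r; lra).
    assert (3 * y * cL y <= 3 * y * C) by (apply Rmult_le_compat_l; lra). lra. }
  assert (Hz : 0 <= y^2 <= 1) by nra.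
  assert (P1 : 0 <= sL y * (3 - y^2) - 3 * y * cU y).
  { replace (sL y * (3 - y^2) - 3 * y * cU y) with
      (y^5 * ((1/15 - y^2/210) + y^2 * y^2 * (1/5040 - 1/13440))) by (unfold sL, cU; field).
    apply Rmult_le_pos; [apply pow_le; lra|]. nra. }
  assert (P2 : sU y * (3 - y^2) - 3 * y * cL y <= y^5).
  { replace (sU y * (3 - y^2) - 3 * y * cL y) with
      (y^5 * ((1/15 - 8/1680 * y^2) + y^2 * y^2 * (1/5040 + 3/362880) - y^2 * y^2 * y^2 / 362880)) by (unfold sU, cL; field).
    assert (0 <= y^5) by (apply pow_le; lra).
    assert ((1/15 - 8/1680 * y^2) + y^2 * y^2 * (1/5040 + 3/362880) - y^2 * y^2 * y^2 / 362880 <= 1).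
    { assert (y^2 * y^2 <= 1) by nra. assert (0 <= y^2 * y^2 * y^2) by (apply Rmult_le_pos; nra). nra. }
    nra. }
  assert (HS2 : 2 * y^3 <= 3 * y^2 * S).
  { assert (y^2 * (y - y^3/6) <= y^2 * S) by (apply Rmult_le_compat_l; lra). nra. }
  assert (E : (S - y * C) / (y^2 * S) - 1/3 = D / (3 * y^2 * S)) by (unfold D; field; lra).
  rewrite E.
  assert (HD : Rabs D <= y^5) by (apply Rabs_le; lra).
  assert (H3S : 0 < 3 * y^2 * S) by (apply Rmult_lt_0_compat; [nra|lra]).
  rewrite Rabs_div; try lra. rewrite (Rabs_right (3 * y^2 * S)); [|lra].
  apply Rle_lt_trans with (y^5 / (2 * y^3)).
  - unfold Rdiv. assert (0 < y^3) by (apply pow_lt; lra).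
    apply Rmult_le_compat; [apply Rabs_pos | left; apply Rinv_0_lt_compat; nra | lra | apply Rinv_le_contravar; [nra|lra]].
  - replace (y^5 / (2 * y^3)) with (y^2 / 2) by (field; lra). nra.
Qed.

Lemma lim0_mM p q : lim0 (mM p q) (1/3).
Proof.
  apply (lim0_ext (fun y => Rpower (sin y / y) (p - 1) * Rpower (cos y) (1 - q) * ((sin y - y * cos y) / (y^2 * sin y))) _ _ (PI/2)).
  - pose proof PI_RGT_0. lra.
  - intros y Hy. symmetry. apply mM_eq. auto.
  - replace (1/3) with (1 * 1 * (1/3)) by ring.
    apply lim0_mul; [apply lim0_mul|apply lim0_R].
    + assert (H := lim0_comp_cont (fun y => sin y / y) (fun t => Rpower t (p - 1)) 1 lim0_sinc).
      cbv beta in H. rewrite Rpower_one in H. apply H.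
      apply derivable_continuous_pt. exists ((p - 1) * Rpower 1 (p - 1 - 1)). apply derivable_pt_lim_power. lra.
    + assert (H := lim0_comp_cont cos (fun t => Rpower t (1 - q)) 1 lim0_cos).
      cbv beta in H. rewrite Rpower_one in H. apply H.
      apply derivable_continuous_pt. exists ((1 - q) * Rpower 1 (1 - q - 1)). apply derivable_pt_lim_power. lra.
Qed.

Lemma cont_limb h b : continuity_pt h b -> limb h b (h b).
Proof.
  intros Hh eps Heps.
  unfold continuity_pt, continue_in, limit1_in, limit_in in Hh.
  destruct (Hh eps Heps) as [a [Ha Ha']]. simpl in Ha'. unfold R_dist in Ha'.
  exists a. split; auto. intros y Hy. apply Ha'. split; [split; [exact I|lra]|].
  rewrite Rabs_left by lra. lra.
Qed.

Lemma limb_fF p : limb (fF p) (PI / 2) (U p (2 / PI)).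
Proof.
  pose proof PI_RGT_0.
  replace (U p (2 / PI)) with (fF p (PI / 2)).
  - apply cont_limb. apply derivable_continuous_pt.
    eexists. apply fF_deriv_raw. lra.
  - unfold fF. rewrite sin_PI2. f_equal. field. lra.
Qed.

Lemma limb_gG q : 0 < q -> limb (gG q) (PI / 2) (1 / q).
Proof.
  intros Hq eps Heps. pose proof PI_RGT_0.
  set (eta := Rmin (eps * q) (1/2)).
  assert (Heta : 0 < eta) by (apply Rmin_pos; nra).
  pose proof (continuity_cos (PI/2)) as Hc.
  unfold continuity_pt, continue_in, limit1_in, limit_in in Hc.
  destruct (Hc (exp (ln eta / q)) (exp_pos _)) as [a [Ha Ha']]. simpl in Ha'. unfold R_dist in Ha'.
  rewrite cos_PI2 in Ha'.
  exists (Rmin a (PI/2)). split; [apply Rmin_pos; lra|].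
  intros y Hy. pose proof (Rmin_l a (PI/2)). pose proof (Rmin_r a (PI/2)).
  assert (Hcy : 0 < cos y) by (apply cos_gt_0; lra).
  assert (Hcs : cos y < exp (ln eta / q)).
  { assert (Rabs (cos y - 0) < exp (ln eta / q)).
    { apply Ha'. split; [split; [exact I|lra]|]. rewrite Rabs_left by lra. lra. }
    rewrite Rminus_0_r, Rabs_right in H2 by lra. auto. }
  assert (HR : Rpower (cos y) q < eta).
  { unfold Rpower. rewrite <- (exp_ln eta) at 1 by auto. apply exp_increasing.
    apply ln_increasing in Hcs; auto. rewrite ln_exp in Hcs.
    apply Rmult_lt_compat_l with (r := q) in Hcs; auto.
    replace (q * (ln eta / q)) with (ln eta) in Hcs by (field; lra). lra. }
  assert (HR0 : 0 < Rpower (cos y) q) by (unfold Rpower; apply exp_pos).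
  unfold gG, U. destruct (Req_EM_T q 0) as [e|_]; [lra|].
  replace ((1 - Rpower (cos y) q) / q - 1 / q) with (- (Rpower (cos y) q / q)) by (field; lra).
  rewrite Rabs_Ropp, Rabs_right.
  - assert (eta <= eps * q) by apply Rmin_l.
    apply Rmult_lt_reg_r with q; auto. unfold Rdiv. rewrite Rmult_assoc, Rinv_l by lra. lra.
  - apply Rle_ge, Rlt_le, Rdiv_lt_0_compat; lra.
Qed.
Lemma lim0_opp h l : lim0 h l -> lim0 (fun y => - h y) (- l).
Proof.
  intros Hl eps He. destruct (Hl eps He) as [d [Hd Hd']]. exists d. split; auto.
  intros y Hy. replace (- h y - - l) with (- (h y - l)) by ring. rewrite Rabs_Ropp. auto.
Qed.

Lemma limb_opp h b l : limb h b l -> limb (fun y => - h y) b (- l).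
Proof.
  intros Hl eps He. destruct (Hl eps He) as [d [Hd Hd']]. exists d. split; auto.
  intros y Hy. replace (- h y - - l) with (- (h y - l)) by ring. rewrite Rabs_Ropp. auto.
Qed.

Lemma gD_pos q y : 0 < y < PI / 2 -> 0 < gD q y.
Proof.
  intros Hy. destruct (trig_basic y Hy) as (Hs & Hc & _). unfold gD.
  apply Rmult_lt_0_compat; [unfold Rpower; apply exp_pos | auto].
Qed.

Lemma PI2_pos : 0 < PI / 2.
Proof. pose proof PI_RGT_0. lra. Qed.

Lemma core_incr p q : (forall x, 0 < x < PI / 2 -> 0 < Gx p q x) ->
  (forall x, 0 < x < PI / 2 -> 0 < gG q x /\ 1/3 * gG q x < fF p x) /\
  (forall c, 1/3 < c -> exists x, 0 < x < PI / 2 /\ fF p x < c * gG q x) /\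
  (0 < q -> forall x, 0 < x < PI / 2 -> fF p x < U p (2 / PI) / (1 / q) * gG q x).
Proof.
  intros HG.
  assert (Hf : forall y, 0 < y < PI/2 -> derivable_pt_lim (fF p) y (gD q y * mM p q y)) by (intros; apply fF_deriv; auto).
  assert (Hg : forall y, 0 < y < PI/2 -> derivable_pt_lim (gG q) y (gD q y)) by (intros; apply gG_deriv; auto).
  assert (Hg' : forall y, 0 < y < PI/2 -> 0 < gD q y) by (intros; apply gD_pos; auto).
  pose proof (mM_incr p q HG) as Hm.
  split; [|split].
  - intros x Hx. split.
    + apply (gen_g_pos (PI/2) (gG q) (gD q) PI2_pos Hg Hg' (lim0_gG q)); auto.
    + apply (gen_lower (PI/2) (1/3) (fF p) (gG q) (gD q) (mM p q) PI2_pos Hf Hg Hg' Hm (lim0_fF p) (lim0_gG q) (lim0_mM p q)); auto.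
  - intros c Hc. apply (gen_bc0 (PI/2) (1/3) (fF p) (gG q) (gD q) (mM p q) PI2_pos Hf Hg Hg' Hm (lim0_fF p) (lim0_gG q) (lim0_mM p q)); auto.
  - intros Hq x Hx.
    apply (gen_kappa (PI/2) (fF p) (gG q) (gD q) (mM p q) Hf Hg Hg' Hm (lim0_fF p) (lim0_gG q)
             (U p (2 / PI)) (1 / q) (limb_fF p) (limb_gG q Hq)); auto.
    apply Rdiv_lt_0_compat; lra.
Qed.

Lemma core_decr p q : (forall x, 0 < x < PI / 2 -> Gx p q x < 0) ->
  (forall x, 0 < x < PI / 2 -> 0 < gG q x /\ fF p x < 1/3 * gG q x) /\
  (forall c, c < 1/3 -> exists x, 0 < x < PI / 2 /\ c * gG q x < fF p x) /\
  (0 < q -> forall x, 0 < x < PI / 2 -> U p (2 / PI) / (1 / q) * gG q x < fF p x).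
Proof.
  intros HG.
  set (nf := fun y => - fF p y). set (nm := fun y => - mM p q y).
  assert (Hf : forall y, 0 < y < PI/2 -> derivable_pt_lim nf y (gD q y * nm y)).
  { intros y Hy. unfold nf, nm. replace (gD q y * - mM p q y) with (- (gD q y * mM p q y)) by ring.
    apply (derivable_pt_lim_opp (fF p)). apply fF_deriv; auto. }
  assert (Hg : forall y, 0 < y < PI/2 -> derivable_pt_lim (gG q) y (gD q y)) by (intros; apply gG_deriv; auto).
  assert (Hg' : forall y, 0 < y < PI/2 -> 0 < gD q y) by (intros; apply gD_pos; auto).
  assert (Hm : forall y z, 0 < y -> y < z -> z < PI/2 -> nm y < nm z) by (apply mM_decr; auto).
  assert (Hf0 : lim0 nf 0) by (replace 0 with (-0) by ring; apply lim0_opp, lim0_fF).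
  assert (Hm0 : lim0 nm (- (1/3))) by (apply lim0_opp, lim0_mM).
  split; [|split].
  - intros x Hx. split.
    + apply (gen_g_pos (PI/2) (gG q) (gD q) PI2_pos Hg Hg' (lim0_gG q)); auto.
    + assert (H := gen_lower (PI/2) (- (1/3)) nf (gG q) (gD q) nm PI2_pos Hf Hg Hg' Hm Hf0 (lim0_gG q) Hm0 x Hx).
      unfold nf in H. lra.
  - intros c Hc.
    destruct (gen_bc0 (PI/2) (- (1/3)) nf (gG q) (gD q) nm PI2_pos Hf Hg Hg' Hm Hf0 (lim0_gG q) Hm0 (- c) ltac:(lra)) as [x [Hx H]].
    exists x. split; auto. unfold nf in H. lra.
  - intros Hq x Hx.
    assert (H := gen_kappa (PI/2) nf (gG q) (gD q) nm Hf Hg Hg' Hm Hf0 (lim0_gG q)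
             (- U p (2 / PI)) (1 / q) (limb_opp _ _ _ (limb_fF p)) (limb_gG q Hq) ltac:(apply Rdiv_lt_0_compat; lra) x Hx).
    unfold nf in H. replace (- U p (2 / PI) / (1 / q)) with (- (U p (2 / PI) / (1 / q))) in H by (field; lra).
    lra.
Qed.

Lemma kappa_eq p q : q <> 0 -> kappa p q = U p (2 / PI) / (1 / q).
Proof.
  intros Hq. pose proof PI_RGT_0. unfold kappa, U.
  destruct (Req_EM_T p 0).
  - replace (2 / PI) with (/ (PI / 2)) by (field; lra). rewrite ln_Rinv by lra. field. auto.
  - field. auto.
Qed.

Lemma tb_eq p q x : 0 < x < PI / 2 -> third_bound p q x = 1 - p * (1/3 * U q (cos x)).
Proof.
  intros Hx. unfold third_bound, U. destruct (Req_EM_T q 0).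
  - field.
  - field. auto.
Qed.

Lemma rs_eq p t : p <> 0 -> Rpower t p = 1 - p * U p t.
Proof. intros Hp. unfold U. destruct (Req_EM_T p 0); [contradiction|]. field. auto. Qed.

Lemma kb_eq p q x : p <> 0 -> q <> 0 -> kappa_bound p q x = 1 - p * (kappa p q * U q (cos x)).
Proof.
  intros Hp Hq. unfold kappa_bound, kappa, U.
  destruct (Req_EM_T p 0); [contradiction|]. destruct (Req_EM_T q 0); [contradiction|].
  field. split; auto.
Qed.

Lemma s0_eq x : 0 < x < PI / 2 -> sinc x = exp (- U 0 (sinc x)).
Proof.
  intros Hx. unfold U. destruct (Req_EM_T 0 0); [|lra].
  rewrite Ropp_involutive, exp_ln; auto. unfold sinc. apply sinc_pos. pose proof PI_RGT_0. lra.
Qed.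

Lemma tb0_eq q x : 0 < x < PI / 2 -> third_bound0 q x = exp (- (1/3 * U q (cos x))).
Proof.
  intros Hx. unfold third_bound0, U, Rpower. destruct (Req_EM_T q 0).
  - f_equal. field.
  - f_equal. field. auto.
Qed.

Lemma kb0_eq q x : q <> 0 -> kappa_bound0 q x = exp (- (kappa 0 q * U q (cos x))).
Proof.
  intros Hq. pose proof PI_RGT_0. unfold kappa_bound0, kappa, U, Rpower.
  destruct (Req_EM_T 0 0); [|lra]. destruct (Req_EM_T q 0); [contradiction|].
  f_equal. replace (2 / PI) with (/ (PI / 2)) by (field; lra). rewrite ln_Rinv by lra. field. auto.
Qed.

Lemma PI_gt3 : 3 < PI.
Proof. pose proof PI2_3_2. lra. Qed.
Theorem theorem1 :
  (* (i) *)
  (forall p q : R, 1 <= q -> p <= 3 * q - 8 / 5 ->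
     (forall x : R, 0 < x < PI / 2 ->
        (0 < p -> kappa_bound p q x < Rpower (sinc x) p /\
                  Rpower (sinc x) p < third_bound p q x) /\
        (p = 0 -> kappa_bound0 q x < sinc x /\ sinc x < third_bound0 q x) /\
        (p < 0 -> third_bound p q x < Rpower (sinc x) p /\
                  Rpower (sinc x) p < kappa_bound p q x)) /\
     (forall c : R, 1 / 3 < c ->
        ~ (forall x : R, 0 < x < PI / 2 -> c * U q (cos x) < U p (sinc x))) /\
     (forall c : R, c < kappa p q ->
        ~ (forall x : R, 0 < x < PI / 2 -> U p (sinc x) < c * U q (cos x)))) /\
  (* (ii) *)
  (forall p q : R, 34 / 35 < q <= 1 -> PI ^ 2 / 4 - 1 <= p ->
     forall x : R, 0 < x < PI / 2 ->
       kappa_bound p q x > Rpower (sinc x) p /\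
       Rpower (sinc x) p > third_bound p q x) /\
  (* (iii) *)
  (forall p q : R, 0 < q <= 34 / 35 -> 3 * q - 8 / 5 <= p ->
     forall x : R, 0 < x < PI / 2 ->
        (0 < p -> kappa_bound p q x > Rpower (sinc x) p /\
                  Rpower (sinc x) p > third_bound p q x) /\
        (p = 0 -> kappa_bound0 q x > sinc x /\ sinc x > third_bound0 q x) /\
        (p < 0 -> third_bound p q x > Rpower (sinc x) p /\
                  Rpower (sinc x) p > kappa_bound p q x)) /\
  (* (iv) *)
  (forall p q : R, q <= 0 -> 3 * q - 8 / 5 <= p ->
     (forall x : R, 0 < x < PI / 2 ->
        (0 < p -> Rpower (sinc x) p > third_bound p q x) /\
        (p = 0 -> sinc x > third_bound0 q x) /\
        (p < 0 -> Rpower (sinc x) p < third_bound p q x)) /\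
     (forall c : R, c < 1 / 3 ->
        ~ (forall x : R, 0 < x < PI / 2 -> U p (sinc x) < c * U q (cos x)))).
Proof.
  pose proof PI_gt3 as Hpi.
  assert (Hsinc : forall x, 0 < x < PI / 2 -> 0 < sinc x) by (intros; unfold sinc; apply sinc_pos; lra).
  split; [|split; [|split]].
  -
    intros p q Hq Hp.
    assert (HG : forall x, 0 < x < PI / 2 -> 0 < Gx p q x) by (intros; apply sign_i; auto).
    destruct (core_incr p q HG) as [Hlow [Hbc Hk]].
    assert (Hq0 : q <> 0) by lra.
    split; [|split].
    + intros x Hx. destruct (Hlow x Hx) as [HB HA]. pose proof (Hk ltac:(lra) x Hx) as HK.
      rewrite <- kappa_eq in HK by auto. unfold fF, gG in *. fold (sinc x) in *.
      set (A := U p (sinc x)) in *. set (B := U q (cos x)) in *. set (k := kappa p q) in *.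
      split; [|split].
      * intros Hp0. rewrite kb_eq, tb_eq, rs_eq by (auto; lra). fold A B k. split; nra.
      * intros Hp0. subst p. rewrite kb0_eq, tb0_eq, (s0_eq x) by (auto; lra). fold A B k.
        split; apply exp_increasing; lra.
      * intros Hp0. rewrite kb_eq, tb_eq, rs_eq by (auto; lra). fold A B k. split; nra.
    + intros c Hc H. destruct (Hbc c Hc) as [x [Hx Hx']]. specialize (H x Hx).
      unfold fF, gG in Hx'. fold (sinc x) in Hx'. lra.
    + intros c Hc H. rewrite (kappa_eq p q Hq0) in Hc.
      apply (gen_bcb (PI/2) (fF p) (gG q) (U p (2 / PI)) (1 / q) c PI2_pos (limb_fF p) (limb_gG q ltac:(lra))); auto.
      apply Rdiv_lt_0_compat; lra.
  -
    intros p q Hq Hp x Hx.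
    assert (HG : forall x, 0 < x < PI / 2 -> Gx p q x < 0) by (intros; apply sign_ii; lra).
    destruct (core_decr p q HG) as [Hlow [_ Hk]].
    assert (Hq0 : q <> 0) by lra.
    assert (Hp0 : 0 < p) by nra.
    destruct (Hlow x Hx) as [HB HA]. pose proof (Hk ltac:(lra) x Hx) as HK.
    rewrite <- kappa_eq in HK by auto. unfold fF, gG in *. fold (sinc x) in *.
    set (A := U p (sinc x)) in *. set (B := U q (cos x)) in *. set (k := kappa p q) in *.
    rewrite kb_eq, tb_eq, rs_eq by (auto; lra). fold A B k. split; nra.
  -
    intros p q Hq Hp x Hx.
    assert (HG : forall x, 0 < x < PI / 2 -> Gx p q x < 0) by (intros; apply sign_iii; lra).
    destruct (core_decr p q HG) as [Hlow [_ Hk]].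
    assert (Hq0 : q <> 0) by lra.
    destruct (Hlow x Hx) as [HB HA]. pose proof (Hk ltac:(lra) x Hx) as HK.
    rewrite <- kappa_eq in HK by auto. unfold fF, gG in *. fold (sinc x) in *.
    set (A := U p (sinc x)) in *. set (B := U q (cos x)) in *. set (k := kappa p q) in *.
    split; [|split].
    + intros Hp0. rewrite kb_eq, tb_eq, rs_eq by (auto; lra). fold A B k. split; nra.
    + intros Hp0. subst p. rewrite kb0_eq, tb0_eq, (s0_eq x) by (auto; lra). fold A B k.
      split; apply exp_increasing; lra.
    + intros Hp0. rewrite kb_eq, tb_eq, rs_eq by (auto; lra). fold A B k. split; nra.
  -
    intros p q Hq Hp.
    assert (HG : forall x, 0 < x < PI / 2 -> Gx p q x < 0) by (intros; apply sign_iii; lra).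
    destruct (core_decr p q HG) as [Hlow [Hbc _]].
    split.
    + intros x Hx. destruct (Hlow x Hx) as [HB HA].
      unfold fF, gG in *. fold (sinc x) in *.
      set (A := U p (sinc x)) in *. set (B := U q (cos x)) in *.
      split; [|split].
      * intros Hp0. rewrite tb_eq, rs_eq by (auto; lra). fold A B. nra.
      * intros Hp0. subst p. rewrite tb0_eq, (s0_eq x) by (auto; lra). fold A B.
        apply exp_increasing; lra.
      * intros Hp0. rewrite tb_eq, rs_eq by (auto; lra). fold A B. nra.
    + intros c Hc H. destruct (Hbc c Hc) as [x [Hx Hx']]. specialize (H x Hx).
      unfold fF, gG in Hx'. fold (sinc x) in Hx'. lra.
Qed.
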